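(* Let $X$ be a nonempty finite set. For all $\kappa,\lambda,\mu,\nu\in\mathcal{D}(X)$ and every $\omega\in\Omega(\lambda,\mu)$, there exist $\pi\in\Omega(\kappa,\mu)$ and $\rho\in\Omega(\lambda,\nu)$ such that $d_{TV}(\omega,\pi)\le d_{TV}(\kappa,\lambda)$ and $d_{TV}(\omega,\rho)\le d_{TV}(\mu,\nu)$.
   Context: $\mathcal{D}(Y)$ is the set of probability distributions on a finite set $Y$. $\Omega(\mu,\nu)=\{\omega\in\mathcal{D}(X\times X)\mid\forall x:\sum_y\omega(x,y)=\mu(x),\ \sum_y\omega(y,x)=\nu(x)\}$. For distributions $\alpha,\beta$ on a finite set $Y$ (here $Y=X$ or $Y=X\times X$), $d_{TV}(\alpha,\beta)=\max_{y\in Y}|\alpha(y)-\beta(y)|$ (a maximum pointwise difference, not the usual total variation). *)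

(* Defs.v *)
From HB Require Import structures.
From mathcomp Require Import all_boot all_order all_algebra.
From mathcomp Require Import reals.
Set Implicit Arguments. Unset Strict Implicit. Unset Printing Implicit Defensive.
Import Order.TTheory GRing.Theory Num.Theory.
Local Open Scope ring_scope.

Definition is_dist (R : realType) (Y : finType) (a : Y -> R) : Prop :=
  (forall y, 0 <= a y) /\ \sum_(y : Y) a y = 1.

Definition is_coupling (R : realType) (X : finType) (mu nu : X -> R)
    (w : X * X -> R) : Prop :=
  is_dist w /\
  (forall x, \sum_(y : X) w (x, y) = mu x) /\
  (forall x, \sum_(y : X) w (y, x) = nu x).

Definition dTV (R : realType) (Y : finType) (a b : Y -> R) : R :=
  \big[Num.max/0]_(y : Y) `|a y - b y|.

(* Main.v *)
Require Import Defs.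
From HB Require Import structures.
From mathcomp Require Import all_boot all_order all_algebra.
From mathcomp Require Import reals.
From mathcomp Require Import lra.
Import Order.TTheory GRing.Theory Num.Theory.
Local Open Scope ring_scope.

Lemma row_le (R : realType) (X : finType) (w : X * X -> R) x y :
  (forall p, 0 <= w p) -> w (x, y) <= \sum_(z : X) w (x, z).
Proof.
move=> H; rewrite (bigD1 y) //= lerDl; apply: sumr_ge0 => ? _; exact: H.
Qed.

Lemma main_lem (R : realType) (X : finType) (d : R)
    (kappa lambda mu : X -> R) (omega : X * X -> R) :
  is_dist kappa -> is_dist lambda -> 
  is_coupling lambda mu omega ->
  (forall x, `|kappa x - lambda x| <= d) ->
  exists pi : X * X -> R, is_coupling kappa mu pi /\
     forall p, `|omega p - pi p| <= d.
Proof.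
move=> [k0 k1] [l0 l1] [[w0 w1] [wr wc]] hd.
pose e x := if kappa x <= lambda x then lambda x - kappa x else 0.
pose f x := if kappa x <= lambda x then 0 else kappa x - lambda x.
pose r x y := omega (x, y) * e x / lambda x.
pose c y := \sum_(x : X) r x y.
pose E := \sum_(x : X) e x.
pose pi (p : X * X) := omega p - r p.1 p.2 + f p.1 * c p.2 / E.
have hd' : forall x, - d <= kappa x - lambda x <= d.
  by move=> x; rewrite -ler_norml.
have e0 x : 0 <= e x by rewrite /e; case: ifP => H //; lra.
have f0 x : 0 <= f x by rewrite /f; case: ifP => H //; rewrite ?lexx //; move/negbT: H; rewrite -ltNge; lra.
have fe x : f x - e x = kappa x - lambda x.
  by rewrite /e /f; case: ifP => H; lra.
have el x : e x <= lambda x by rewrite /e; case: ifP => H; have := k0 x; have := l0 x; lra.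
have ed x : e x <= d by rewrite /e; case: ifP => H; case/andP: (hd' x) => ? ?; lra.
have fd x : f x <= d by rewrite /f; case: ifP => H; case/andP: (hd' x) => ? ?; lra.
have wl x y : omega (x, y) <= lambda x by rewrite -wr; apply: row_le.
have r0 x y : 0 <= r x y.
  by rewrite /r; apply: mulr_ge0; [apply: mulr_ge0|rewrite invr_ge0].
have rw x y : r x y <= omega (x, y) /\ r x y <= e x.
  rewrite /r; have [->|ln0] := eqVneq (lambda x) 0.
    by rewrite invr0 mulr0.
  have lp : 0 < lambda x by rewrite lt_def ln0 l0.
  split.
    by rewrite -mulrA; apply: ler_piMr => //; rewrite ler_pdivrMr // mul1r.
  rewrite ler_pdivrMr // mulrC; apply: ler_wpM2l => //.
have rsum x : \sum_(y : X) r x y = e x.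
  rewrite /r -mulr_suml -mulr_suml wr.
  have [l00|ln0] := eqVneq (lambda x) 0.
    by have := el x; have := e0 x; rewrite l00 invr0 mulr0; lra.
  by rewrite mulrC mulKf.
have c0 y : 0 <= c y by apply: sumr_ge0.
have cE y : c y <= E by apply: ler_sum => x _; case: (rw x y).
have sumc : \sum_(y : X) c y = E by rewrite /c exchange_big; apply: eq_bigr => x _; exact: rsum.
have sumf : \sum_(x : X) f x = E.
  apply/eqP; rewrite -subr_eq0 -sumrB.
  rewrite (eq_bigr (fun x => kappa x - lambda x)); last by move=> x _; exact: fe.
  by rewrite sumrB k1 l1 subrr.
have E0 : 0 <= E by apply: sumr_ge0.
have a0 x y : 0 <= f x * c y / E by apply: divr_ge0 => //; apply: mulr_ge0.
have af x y : f x * c y / E <= f x.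
  have [->|En0] := eqVneq E 0; first by rewrite invr0 mulr0.
  have Ep : 0 < E by rewrite lt_def En0 E0.
  by rewrite -mulrA; apply: ler_piMr => //; rewrite ler_pdivrMr // mul1r.
have rows x : \sum_(y : X) pi (x, y) = kappa x.
  rewrite /pi big_split /= sumrB wr rsum -mulr_suml -mulr_sumr sumc.
  have [E00|En0] := eqVneq E 0.
    rewrite E00 invr0 mulr0.
    have he : e x = 0.
      by move/eqP: E00; rewrite psumr_eq0 => [/allP/(_ x (mem_index_enum _))/implyP/(_ isT)/eqP|] //.
    have hf : f x = 0.
      by move: E00; rewrite -sumf => /eqP; rewrite psumr_eq0 => [/allP/(_ x (mem_index_enum _))/implyP/(_ isT)/eqP|] //.
    have := fe x; rewrite he hf; lra.
  rewrite mulfK //; have := fe x; lra.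
have cols y : \sum_(x : X) pi (x, y) = mu y.
  rewrite /pi big_split /= sumrB wc -/(c y) -!mulr_suml sumf.
  have [E00|En0] := eqVneq E 0.
    have := cE y; have := c0 y; rewrite E00 invr0 mulr0; lra.
  by rewrite mulrC mulKf // subrK.
exists pi; split.
  split; [split|split] => //.
    move=> [x y]; rewrite /pi /=; have := a0 x y; case: (rw x y); lra.
  transitivity (\sum_(x : X) \sum_(y : X) pi (x, y)).
    by rewrite pair_big; apply: eq_bigr; case.
  by rewrite (eq_bigr _ (fun x _ => rows x)).
move=> [x y]; rewrite /pi /= ler_norml.
have := a0 x y; have := af x y; have := fd x; have := ed x; have := r0 x y; case: (rw x y).
move=> _ H1 H2 H3 H4 H5 H6; apply/andP; split; lra.
Qed.

Theorem lemma2 (R : realType) (X : finType) (hX : (0 < #|X|)%N)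
    (kappa lambda mu nu : X -> R) (omega : X * X -> R) :
  is_dist kappa -> is_dist lambda -> is_dist mu -> is_dist nu ->
  is_coupling lambda mu omega ->
  exists pi rho : X * X -> R,
    [/\ is_coupling kappa mu pi, is_coupling lambda nu rho,
        dTV omega pi <= dTV kappa lambda &
        dTV omega rho <= dTV mu nu].
Proof.
move=> hk hl hm hn hw.
case/card_gt0P: hX => x0 _.
have bnd (a b : X -> R) x : `|a x - b x| <= dTV a b.
  exact: (le_bigmax _ (fun y => `|a y - b y|) x).
have g0 (a b : X -> R) : 0 <= dTV a b.
  by apply: le_trans (bnd a b x0); apply: normr_ge0.
have [pi [hpi dpi]] := @main_lem _ _ _ _ _ _ _ hk hl hw (bnd kappa lambda).
pose omega' (p : X * X) := omega (p.2, p.1).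
have hw' : is_coupling mu lambda omega'.
  case: hw => [[w0 w1] [wr wc]]; split; [split|split] => //.
    move=> p; exact: w0.
  transitivity (\sum_(x : X) \sum_(y : X) omega' (x, y)).
    by rewrite pair_big; apply: eq_bigr; case.
  rewrite exchange_big pair_big /=.
  by rewrite -w1; apply: eq_bigr; case.
have bnd' x : `|nu x - mu x| <= dTV mu nu by rewrite distrC; apply: bnd.
have [pi' [[[p0 p1] [pr pc]] dpi']] := @main_lem _ _ _ _ _ _ _ hn hm hw' bnd'.
exists pi, (fun p => pi' (p.2, p.1)); split => //.
- split; [split|split] => //.
    try (move=> p; exact: p0).
  transitivity (\sum_(x : X) \sum_(y : X) pi' (y, x)).
    by rewrite pair_big; apply: eq_bigr; case.
  rewrite exchange_big pair_big /=.
  by rewrite -p1; apply: eq_bigr; case.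
- apply/bigmax_leP; split; first exact: g0.
  by move=> p _; apply: dpi.
- apply/bigmax_leP; split; first exact: g0.
  move=> [x y] _ /=; have := dpi' (y, x); rewrite /omega' /=; exact.
Qed.
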